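(* Let $\{W_i\}_{i=1}^M$ be subspaces of $\mathbb{R}^N$ which do phase retrieval, and assume $\sum_{i=1}^M\dim(W_i)=2N-1$. Then $W_i\cap W_j=\{0\}$ for all $i\neq j$.
   Context: A family of subspaces $\{W_i\}_{i=1}^M$ of $\mathbb{R}^N$ with orthogonal projections $\{P_i\}_{i=1}^M$ does phase retrieval if for all $x,y\in\mathbb{R}^N$, $\|P_ix\|=\|P_iy\|$ for all $i$ implies $x=\pm y$. *)

(* Defs.v *)
(* R^N is modelled as row vectors 'rV[R]_N over R : realType;
   a subspace W of R^N is the row space of a square matrix W : 'M[R]_N. *)
From HB Require Import structures.
From mathcomp Require Import all_boot all_order all_algebra.
From mathcomp Require Import boolp reals.
Set Implicit Arguments. Unset Strict Implicit. Unset Printing Implicit Defensive.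
Import Order.TTheory GRing.Theory Num.Theory.
Local Open Scope ring_scope.

Definition dotv (R : realType) (N : nat) (u v : 'rV[R]_N) : R :=
  \sum_(j < N) u 0 j * v 0 j.
Definition enorm (R : realType) (N : nat) (u : 'rV[R]_N) : R :=
  Num.sqrt (dotv u u).

Definition is_orth_proj (R : realType) (N : nat) (W : 'M[R]_N) (x p : 'rV[R]_N) : Prop :=
  (p <= W)%MS /\ forall w : 'rV[R]_N, (w <= W)%MS -> dotv (x - p) w = 0.

(* The orthogonal projection onto W (exists uniquely in finite dimension),
   chosen via the library's classical choice. *)
Definition orth_proj (R : realType) (N : nat) (W : 'M[R]_N) (x : 'rV[R]_N) : 'rV[R]_N :=
  match pselect (exists p, is_orth_proj W x p) with
  | left H => projT1 (cid H)
  | right _ => 0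
  end.

Definition phase_retrieval (R : realType) (N M : nat) (W : 'I_M -> 'M[R]_N) : Prop :=
  forall x y : 'rV[R]_N,
    (forall i, enorm (orth_proj (W i) x) = enorm (orth_proj (W i) y)) ->
    x = y \/ x = - y.

(* Main.v *)
Require Import Defs.
From HB Require Import structures.
From mathcomp Require Import all_boot all_order all_algebra.
From mathcomp Require Import boolp reals.
From mathcomp Require Import lra zify.
Import Order.TTheory GRing.Theory Num.Theory.
Set Implicit Arguments. Unset Strict Implicit. Unset Printing Implicit Defensive.
Local Open Scope ring_scope.

Lemma dotvE (R : realType) (N : nat) (u w : 'rV[R]_N) : dotv u w = (u *m w^T) 0 0.
Proof. by rewrite /dotv !mxE; apply: eq_bigr => k _; rewrite mxE. Qed.

Lemma dotvC (R : realType) (N : nat) (u w : 'rV[R]_N) : dotv u w = dotv w u.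
Proof. by rewrite /dotv; apply: eq_bigr => k _; rewrite mulrC. Qed.

Lemma dotvDl (R : realType) (N : nat) (u v w : 'rV[R]_N) : dotv (u + v) w = dotv u w + dotv v w.
Proof. by rewrite /dotv -big_split; apply: eq_bigr => k _; rewrite mxE mulrDl. Qed.

Lemma dotvNl (R : realType) (N : nat) (u w : 'rV[R]_N) : dotv (- u) w = - dotv u w.
Proof. by rewrite /dotv -sumrN; apply: eq_bigr => k _; rewrite mxE mulNr. Qed.

Lemma dotvBl (R : realType) (N : nat) (u v w : 'rV[R]_N) : dotv (u - v) w = dotv u w - dotv v w.
Proof. by rewrite dotvDl dotvNl. Qed.

Lemma dotv_eq0 (R : realType) (N : nat) (u : 'rV[R]_N) : dotv u u = 0 -> u = 0.
Proof.
move=> /eqP; rewrite /dotv psumr_eq0; last by move=> k _; rewrite -expr2 sqr_ge0.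
move=> /allP H; apply/rowP => k; rewrite mxE.
have /implyP := H k (mem_index_enum k).
by move=> /(_ isT); rewrite mulf_eq0 orbb => /eqP.
Qed.

Lemma orth_ker (R : realType) (N m : nat) (u : 'rV[R]_N) (W : 'M[R]_(m, N)) :
  (u <= kermx W^T)%MS -> forall w, (w <= W)%MS -> dotv u w = 0.
Proof.
rewrite sub_kermx => /eqP H w /submxP [c ->].
by rewrite dotvE trmx_mul mulmxA H mul0mx mxE.
Qed.

Lemma ker_orth (R : realType) (N m : nat) (u : 'rV[R]_N) (W : 'M[R]_(m, N)) :
  (forall w, (w <= W)%MS -> dotv u w = 0) -> (u <= kermx W^T)%MS.
Proof.
move=> H; rewrite sub_kermx; apply/eqP/rowP => j.
rewrite [RHS]mxE -(H (row j W) (row_sub _ _)) dotvE !mxE.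
by apply: eq_bigr => k _; rewrite !mxE.
Qed.

Lemma cap_ker0 (R : realType) (N m : nat) (W : 'M[R]_(m, N)) (z : 'rV[R]_N) :
  (z <= W)%MS -> (z <= kermx W^T)%MS -> z = 0.
Proof. by move=> h1 h2; apply: dotv_eq0; exact: (orth_ker h2 h1). Qed.

Lemma proj_exists (R : realType) (N : nat) (W : 'M[R]_N) (x : 'rV[R]_N) :
  exists p, is_orth_proj W x p.
Proof.
set K := kermx W^T.
have dis : (W :&: K <= (0 : 'M[R]_N))%MS.
  apply/row_subP => i; rewrite submx0; apply/eqP.
  have := row_sub i (W :&: K)%MS; rewrite sub_capmx => /andP [h1 h2].
  exact: cap_ker0 h1 h2.
have full : row_full (W + K)%MS.
  rewrite /row_full mxrank_disjoint_sum; last by apply/eqP; rewrite -submx0.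
  by rewrite mxrank_ker mxrank_tr subnKC //; exact: rank_leq_col.
have /sub_addsmxP [[c1 c2] /= Ex] := submx_full x full.
exists (c1 *m W); split; first exact: submxMl.
apply: orth_ker; rewrite Ex addrC addKr; exact: submxMl.
Qed.

Lemma proj_spec (R : realType) (N : nat) (W : 'M[R]_N) (x : 'rV[R]_N) :
  is_orth_proj W x (orth_proj W x).
Proof.
rewrite /orth_proj; case: pselect => [H|H]; first exact: (projT2 (cid H)).
by exfalso; apply: H; apply: proj_exists.
Qed.

Lemma subN (R : realType) (N m : nat) (A : 'rV[R]_N) (C : 'M[R]_(m, N)) :
  (A <= C)%MS -> (- A <= C)%MS.
Proof. by rewrite eqmx_opp. Qed.

Lemma proj_uniq (R : realType) (N : nat) (W : 'M[R]_N) (x p q : 'rV[R]_N) :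
  is_orth_proj W x p -> is_orth_proj W x q -> p = q.
Proof.
move=> [hp op] [hq oq].
have hd : (p - q <= W)%MS by apply: addmx_sub => //; apply: subN.
apply/eqP; rewrite -subr_eq0; apply/eqP; apply: dotv_eq0.
have e : (x - q) - (x - p) = p - q by rewrite opprB [LHS]addrC addrA subrK.
rewrite -{1}e.
by rewrite dotvBl op // oq // subr0.
Qed.

Lemma proj_add (R : realType) (N : nat) (W : 'M[R]_N) (x y p q : 'rV[R]_N) :
  is_orth_proj W x p -> is_orth_proj W y q -> is_orth_proj W (x + y) (p + q).
Proof.
move=> [hp op] [hq oq]; split; first exact: addmx_sub.
move=> w hw; have -> : x + y - (p + q) = (x - p) + (y - q).
  by rewrite opprD addrACA.
by rewrite dotvDl op // oq // addr0.
Qed.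

Lemma proj_opp (R : realType) (N : nat) (W : 'M[R]_N) (x p : 'rV[R]_N) :
  is_orth_proj W x p -> is_orth_proj W (- x) (- p).
Proof.
move=> [hp op]; split; first exact: subN.
by move=> w hw; rewrite -opprD dotvNl op // oppr0.
Qed.

Lemma proj_in (R : realType) (N m : nat) (W : 'M[R]_N) (A : 'M[R]_(m, N)) (u : 'rV[R]_N) :
  (A <= W)%MS -> (forall a, (a <= A)%MS -> dotv u a = 0) ->
  (orth_proj W u <= W :&: kermx A^T)%MS.
Proof.
move=> hA hu; have [hp op] := proj_spec W u.
rewrite sub_capmx hp /=; apply: ker_orth => a ha.
have -> : orth_proj W u = u - (u - orth_proj W u) by rewrite opprB addrC subrK.
by rewrite dotvBl hu // op ?subr0 //; apply: submx_trans hA.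
Qed.

Lemma norm_eq (R : realType) (N : nat) (W : 'M[R]_N) (u v : 'rV[R]_N) :
  dotv (orth_proj W u) v = 0 ->
  enorm (orth_proj W (u + v)) = enorm (orth_proj W (u - v)).
Proof.
move=> h.
have hu := proj_spec W u; have hv := proj_spec W v.
rewrite (proj_uniq (proj_spec W (u + v)) (proj_add hu hv)).
rewrite (proj_uniq (proj_spec W (u - v)) (proj_add hu (proj_opp hv))).
set p := orth_proj W u; set q := orth_proj W v.
have pq : dotv p q = 0.
  have [hp _] := hu; have [_ oq] := hv.
  have -> : q = v - (v - q) by rewrite opprB addrC subrK.
  by rewrite dotvC dotvBl dotvC h oq // subr0.
rewrite /enorm; congr Num.sqrt.
rewrite !dotvDl !dotvNl ![dotv _ (_ + _)]dotvC !dotvDl ?[dotv _ (- _)]dotvC !dotvNl.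
rewrite [dotv q p]dotvC pq; lra.
Qed.
Definition trunc (R : realType) (N : nat) (j : nat) (W : 'M[R]_N) : 'M[R]_N :=
  \matrix_(i, k) (if (i < j)%N then W i k else 0).

Lemma row_trunc (R : realType) (N : nat) (j : nat) (W : 'M[R]_N) i :
  row i (trunc j W) = if (i < j)%N then row i W else 0.
Proof. by apply/rowP => k; rewrite !mxE; case: ifP; rewrite ?mxE. Qed.

Lemma trunc_sub (R : realType) (N : nat) (j : nat) (W : 'M[R]_N) : (trunc j W <= W)%MS.
Proof. by apply/row_subP => i; rewrite row_trunc; case: ifP => _; rewrite ?row_sub ?sub0mx. Qed.

Lemma trunc_N (R : realType) (N : nat) (W : 'M[R]_N) : trunc N W = W.
Proof. by apply/matrixP => i k; rewrite mxE ltn_ord. Qed.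

Lemma trunc_0 (R : realType) (N : nat) (W : 'M[R]_N) : trunc 0 W = 0.
Proof. by apply/matrixP => i k; rewrite !mxE. Qed.

Lemma rank_step (R : realType) (N m : nat) (X : 'M[R]_(m, N)) (W : 'M[R]_N) j :
  (\rank (X + trunc j.+1 W) <= (\rank (X + trunc j W)).+1)%N.
Proof.
case: (ltnP j N) => hj; last first.
  have -> : trunc j.+1 W = trunc j W; last by [].
  apply/matrixP => i k; rewrite !mxE; have := ltn_ord i => hi.
  by rewrite (leq_trans hi hj) (leq_trans hi (leqW hj)).
set o := Ordinal hj.
have sub : (X + trunc j.+1 W <= (X + trunc j W) + row o W)%MS.
  rewrite addsmx_sub; apply/andP; split.
    by apply: submx_trans (addsmxSl _ _); apply: addsmxSl.
  apply/row_subP => i; rewrite row_trunc ltnS leq_eqVlt.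
  case: eqP => [ei|ni] /=.
    have -> : i = o by apply: val_inj.
    exact: addsmxSr.
  case: ifP => hi; last exact: sub0mx.
  apply: submx_trans (addsmxSl _ _); apply: submx_trans (addsmxSr _ _).
  by have := row_sub i (trunc j W); rewrite row_trunc hi.
apply: leq_trans (mxrankS sub) _.
apply: leq_trans (mxrank_adds_leqif _ _).1 _.
by rewrite -[X in (_ <= X)%N]addn1 leq_add2l rank_leq_row.
Qed.

Lemma nat_ivt (f : nat -> nat) n k :
  (forall j, (f j.+1 <= (f j).+1)%N) -> (f 0 <= k <= f n)%N -> exists j, f j = k.
Proof.
move=> hs; elim: n => [|n IH] /andP [h0 hn].
  by exists 0%N; apply/eqP; rewrite eqn_leq hn h0.
case: (leqP k (f n)) => hk; first by apply: IH; rewrite h0 hk.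
exists n.+1; apply/eqP; rewrite eqn_leq hn andbT.
by apply: leq_trans (hs n) _.
Qed.

Lemma choose_k n (l r : nat -> nat) (K : nat) :
  (forall i, l i <= r i)%N -> (\sum_(i < n) l i <= K <= \sum_(i < n) r i)%N ->
  exists k : nat -> nat, (forall i, l i <= k i <= r i)%N /\ (\sum_(i < n) k i)%N = K.
Proof.
elim: n K => [|n IH] K hlr.
  rewrite !big_ord0 => /andP [h1 h2]; exists l; split.
    by move=> i; rewrite leqnn hlr.
  by rewrite big_ord0; apply/eqP; rewrite eqn_leq h1 h2.
rewrite !big_ord_recr /= => /andP [h1 h2].
set Ln := (\sum_(i < n) l i)%N in h1 *; set Rn := (\sum_(i < n) r i)%N in h2 *.
set kn := maxn (l n) (K - Rn).
have hln := hlr n.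
have hLR : (Ln <= Rn)%N by apply: leq_sum => i _; apply: hlr.
have [k' [hk' sk']] : exists k : nat -> nat, (forall i, l i <= k i <= r i)%N /\ (\sum_(i < n) k i)%N = (K - kn)%N.
  apply: (IH _ hlr); apply/andP; rewrite /kn -/Ln -/Rn; split; lia.
exists (fun i => if i == n then kn else k' i); split.
  move=> i; case: eqP => [->|_]; last exact: hk'.
  rewrite /kn; lia.
rewrite big_ord_recr /= eqxx.
rewrite (eq_bigr (fun i : 'I_n => k' i)); last by move=> i _; rewrite (ltn_eqF (ltn_ord i)).
rewrite sk' /kn; lia.
Qed.

Lemma rank_sum_le (R : realType) (N : nat) (I : finType) (P : pred I) (A : I -> 'M[R]_N) :
  (\rank (\sum_(i | P i) A i)%MS <= \sum_(i | P i) \rank (A i))%N.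
Proof.
apply: (big_ind2 (fun X n => \rank X <= n)%N); first by rewrite mxrank0.
  move=> X n Y m h1 h2; apply: leq_trans (mxrank_adds_leqif _ _).1 _.
  exact: leq_add.
by move=> i _.
Qed.

Lemma orth_vec (R : realType) (N : nat) (S : 'M[R]_N) :
  (\rank S < N)%N -> exists u : 'rV[R]_N, u != 0 /\ forall a : 'rV[R]_N, (a <= S)%MS -> dotv u a = 0.
Proof.
move=> hS; set K := kermx S^T.
have hK : K != 0 by rewrite -mxrank_eq0 mxrank_ker mxrank_tr subn_eq0 -ltnNge.
case: (pickP (fun r => row r K != 0)) => [r hr|h0]; last first.
  exfalso; move/negP: hK; apply; apply/eqP/row_matrixP => r.
  by have := h0 r => /= /negbFE /eqP ->; rewrite row0.
exists (row r K); split => //; apply: orth_ker; exact: row_sub.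
Qed.

Theorem mainTheorem9 (R : realType) (N M : nat) (W : 'I_M -> 'M[R]_N) :
  phase_retrieval W ->
  (\sum_(i < M) \rank (W i))%N = (2 * N - 1)%N ->
  forall i j : 'I_M, i != j -> (W i :&: W j == (0 : 'M[R]_N))%MS.
Proof.
move=> PR hsum i j hij.
apply/andP; split; last exact: sub0mx.
rewrite submx0; apply/negPn/negP => hC.
set C := (W i :&: W j)%MS in hC.
have [w [hw w_i w_j]] : exists w : 'rV[R]_N, [/\ w != 0, (w <= W i)%MS & (w <= W j)%MS].
  case: (pickP (fun r => row r C != 0)) => [r hr|h0]; last first.
    exfalso; move/negP: hC; apply; apply/eqP/row_matrixP => r.
    by have := h0 r => /= /negbFE /eqP ->; rewrite row0.
  have := row_sub r C; rewrite sub_capmx => /andP [h1 h2].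
  by exists (row r C).

have rw1 : \rank w = 1%N.
  apply/eqP; rewrite eqn_leq rank_leq_row lt0n mxrank_eq0 hw //.
pose wi (t : 'I_M) : 'rV[R]_N := if (t == i) || (t == j) then w else 0.
have wsub t : (wi t <= W t)%MS.
  rewrite /wi; case: ifP => [/orP [/eqP -> | /eqP ->] //|_]; exact: sub0mx.
pose l (n : nat) := if insub n is Some t then \rank (wi t) else 0%N.
pose r (n : nat) := if insub n is Some t then \rank (W t) else 0%N.
have lE (t : 'I_M) : l t = \rank (wi t) by rewrite /l valK.
have rE (t : 'I_M) : r t = \rank (W t) by rewrite /r valK.
have hlr n : (l n <= r n)%N.
  rewrite /l /r; case: insub => [t|//]; exact: mxrankS.
have suml : (\sum_(t < M) l t = 2)%N.
  rewrite (eq_bigr (fun t => \rank (wi t))); last by move=> t _; rewrite lE.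
  rewrite (bigD1 i) //= (bigD1 j) 1?eq_sym //= big1.
    by rewrite /wi eqxx /= eqxx orbT rw1.
  move=> t /andP [ti tj]; rewrite /wi (negbTE ti) (negbTE tj) /=; exact: mxrank0.
have sumr : (\sum_(t < M) r t = 2 * N - 1)%N.
  by rewrite -hsum; apply: eq_bigr => t _; rewrite rE.
have N2 : (2 <= N)%N.
  have : (\sum_(t < M) l t <= \sum_(t < M) r t)%N by apply: leq_sum => t _.
  rewrite suml sumr; lia.
have [k [hk sk]] := choose_k hlr (K := N) (n := M) ltac:(rewrite suml sumr; apply/andP; split; lia).
have ex_s t : exists s, \rank (wi t + trunc s (W t))%MS = k t.
  apply: (nat_ivt (n := N)); first by move=> s; apply: rank_step.
  rewrite trunc_0 addsmx0 trunc_N.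
  have /addsmx_idPr -> := wsub t.
  by rewrite -lE -rE hk.
have [s hs] := choice ex_s.
pose A t := (wi t + trunc (s t) (W t))%MS.
have AW t : (A t <= W t)%MS by rewrite addsmx_sub wsub trunc_sub.
have wA t : (wi t <= A t)%MS by apply: addsmxSl.
pose B t := (W t :&: kermx (A t)^T)%MS.
have rB t : (\rank (B t) + k t <= \rank (W t))%N.
  have cap0 : \rank (A t :&: B t)%MS = 0%N.
    apply/eqP; rewrite mxrank_eq0 -submx0; apply/row_subP => q; rewrite submx0; apply/eqP.
    have := row_sub q (A t :&: B t)%MS; rewrite !sub_capmx => /and3P [h1 _ h2].
    exact: cap_ker0 h1 h2.
  have := mxrank_sum_cap (A t) (B t); rewrite cap0 addn0 hs addnC => <-.
  by apply: mxrankS; rewrite addsmx_sub AW capmxSl.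
pose SA := (\sum_t A t)%MS.
pose SB := (\sum_t B t)%MS.
have rSA : (\rank SA < N)%N.
  pose S' := (\sum_(t | t != i) A t)%MS.
  have eSA : SA = (A i + S')%MS by rewrite /SA (bigD1 i).
  have hcap : (1 <= \rank (A i :&: S'))%N.
    rewrite -rw1; apply: mxrankS; rewrite sub_capmx; apply/andP; split.
      by have := wA i; rewrite /wi eqxx.
    apply: (sumsmx_sup j); first by rewrite eq_sym.
    by have := wA j; rewrite /wi eqxx orbT.
  have h1 := mxrank_sum_cap (A i) S'.
  have h2 : (\rank S' <= \sum_(t | t != i) k t)%N.
    apply: leq_trans (rank_sum_le _ _) _; apply: leq_sum => t _; by rewrite hs.
  have hAi : \rank (A i) = k i := hs i.
  have h3 : (k i + \sum_(t | t != i) k t = N)%N by rewrite -sk [in RHS](bigD1 i).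
  rewrite eSA; lia.
have rSB : (\rank SB < N)%N.
  have h1 : (\rank SB <= \sum_t \rank (B t))%N by apply: rank_sum_le.
  have h2 : (\sum_t \rank (B t) + \sum_(t < M) k t <= \sum_(t < M) r t)%N.
    rewrite -big_split; apply: leq_sum => t _; by rewrite rE rB.
  rewrite sk sumr in h2; lia.
have [u [hu ou]] := orth_vec rSA.
have [v [hv ov]] := orth_vec rSB.
have key t : dotv (orth_proj (W t) u) v = 0.
  rewrite dotvC; apply: ov; apply: (sumsmx_sup t) => //.
  apply: proj_in; first exact: AW.
  by move=> a ha; apply: ou; apply: (sumsmx_sup t).
have [e|e] := PR (u + v) (u - v) (fun t => norm_eq (key t)).
  move/negP: hv; apply; apply/eqP/rowP => q.
  have := congr1 (fun z : 'rV[R]_N => z 0 q) e; rewrite /= !mxE; lra.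
move/negP: hu; apply; apply/eqP/rowP => q.
have := congr1 (fun z : 'rV[R]_N => z 0 q) e; rewrite /= !mxE; lra.
Qed.
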